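(* Let $r\ge 3$ and $k\ge 2$ be integers and $n=2k\cdot 3^{r-1}$. Then there exists an $r$-regular word of length $n$ over a three-letter alphabet.
   Context: For a word $u=u_1\cdots u_m$ over an alphabet $\mathcal A$ with $b$ letters and an integer $r\ge -1$, $u$ is $r$-regular if for every $k=0,1,\dots,r$ the sum $\sum_{1\le t\le m,\ u_t=c} t^k$ is the same for all letters $c\in\mathcal A$ (a letter not occurring contributes $0$). Here $b=3$. *)

(* Defs.v *)
From mathcomp Require Import all_boot all_algebra.
Set Implicit Arguments. Unset Strict Implicit. Unset Printing Implicit Defensive.

Definition letter_pow_sum (A : eqType) (u : seq A) (c : A) (k : nat) : nat :=
  \sum_(0 <= i < size u | nth c u i == c) (i.+1) ^ k.

(* u is r-regular over the finite alphabet A (r given as an integer >= -1;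
   r = -1 imposes no condition). *)
Definition regular (A : finType) (r : int) (u : seq A) : Prop :=
  forall k : nat, (Posz k <= r)%R ->
    forall c c' : A, letter_pow_sum u c k = letter_pow_sum u c' k.

(* Main.v *)
Require Import Defs.
From mathcomp Require Import all_boot all_algebra.
From mathcomp Require Import zify.

Set Implicit Arguments. Unset Strict Implicit.
Notation lps := letter_pow_sum.

Lemma lps_cat (A : eqType) (u v : seq A) c j :
  lps (u ++ v) c j = lps u c j +
    (\sum_(l < j) 'C(j, l) * (size u ^ (j - l) * lps v c l) + lps v c j).
Proof.
rewrite /letter_pow_sum size_cat (@big_cat_nat _ _ _ (size u)) ?leq_addr //.
apply: f_equal2.
  apply: congr_big_nat => // i /andP [_ Hi].
  by rewrite nth_cat Hi.
rewrite -{1}(add0n (size u)) big_addn addKn.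
rewrite (eq_big (fun i => nth c v i == c) (fun i => \sum_(l < j.+1) 'C(j, l) * (size u ^ (j - l) * i.+1 ^ l))); first last.
- by move=> i _; rewrite -addSn addnC expnDn.
- by move=> i; rewrite nth_cat ltnNge leq_addl /= addnK.
rewrite exchange_big big_ord_recr /= binn subnn expn0.
congr (_ + _).
  by apply: eq_bigr => l _; rewrite !big_distrr.
by apply: eq_bigr => i _; rewrite !mul1n.
Qed.

Lemma lps_map (A : eqType) (f g : A -> A) (fK : cancel f g) (gK : cancel g f)
   (w : seq A) c j : lps (map f w) c j = lps w (g c) j.
Proof.
rewrite /letter_pow_sum size_map.
apply: congr_big_nat => // i /andP [_ Hi].
by rewrite (nth_map (g c)) // (can2_eq fK gK).
Qed.

Definition reg {A : eqType} (s : nat) (u : seq A) :=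
  forall j, j <= s -> forall c c', lps u c j = lps u c' j.

Lemma reg_cat (A : eqType) (s : nat) (u v : seq A) : reg s u -> reg s v -> reg s (u ++ v).
Proof.
move=> Hu Hv j Hj c c'; rewrite !lps_cat (Hu j Hj c c') (Hv j Hj c c').
congr (_ + (_ + _)); apply: eq_bigr => l _.
by rewrite (Hv l _ c c') // ltnW // (leq_trans (ltn_ord l)).
Qed.

Lemma reg_map (A : eqType) (f g : A -> A) (fK : cancel f g) (gK : cancel g f) (s : nat) (w : seq A) :
  reg s w -> reg s (map f w).
Proof. by move=> Hw j Hj c c'; rewrite !(lps_map fK gK); apply: Hw. Qed.

Lemma reg_nil (A : eqType) (s : nat) : reg s ([::] : seq A).
Proof. by move=> j _ c c'; rewrite /letter_pow_sum !big_geq. Qed.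

Definition f3 (i : 'I_3) : 'I_3 := (i + 1)%R.
Definition g3 (i : 'I_3) : 'I_3 := (i - 1)%R.
Lemma f3K : cancel f3 g3. Proof. by move=> i; rewrite /f3 /g3 GRing.addrK. Qed.
Lemma g3K : cancel g3 f3. Proof. by move=> i; rewrite /f3 /g3 GRing.subrK. Qed.

Lemma key3 (F : 'I_3 -> nat) c : F c + F (g3 c) + F (g3 (g3 c)) = F 0%R + F 1%R + F 2%R.
Proof.
have g0 : g3 0%R = 2%R by apply/eqP.
have g1 : g3 1%R = 0%R by apply/eqP.
have g2 : g3 2%R = 1%R by apply/eqP.
have : [\/ c = 0%R, c = 1%R | c = 2%R].
  case: c => [[|[|[|m]]] Hm] //.
  - by constructor 1; apply/val_inj.
  - by constructor 2; apply/val_inj.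
  - by constructor 3; apply/val_inj.
by case=> ->; rewrite ?g0 ?g1 ?g2 ?g0 ?g1 ?g2; lia.
Qed.

Definition triple (w : seq 'I_3) := w ++ (map f3 w ++ map f3 (map f3 w)).

Lemma reg_triple (s : nat) w : reg s w -> reg s.+1 (triple w).
Proof.
move=> Hw.
have Hf : reg s (map f3 w) by apply: (reg_map f3K g3K).
have Hff : reg s (map f3 (map f3 w)) by apply: (reg_map f3K g3K).
have H2 := reg_cat Hf Hff.
move=> j Hj c c'; rewrite /triple !lps_cat !(lps_map f3K g3K).
have E1 : \sum_(l < j) 'C(j, l) * (size w ^ (j - l) * lps (map f3 w ++ map f3 (map f3 w)) c l)
  = \sum_(l < j) 'C(j, l) * (size w ^ (j - l) * lps (map f3 w ++ map f3 (map f3 w)) c' l).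
  by apply: eq_bigr => l _; rewrite (H2 l _ c c') // -ltnS (leq_trans (ltn_ord l)).
have E2 : \sum_(l < j) 'C(j, l) * (size (map f3 w) ^ (j - l) * lps (map f3 (map f3 w)) c l)
  = \sum_(l < j) 'C(j, l) * (size (map f3 w) ^ (j - l) * lps (map f3 (map f3 w)) c' l).
  by apply: eq_bigr => l _; rewrite (Hff l _ c c') // -ltnS (leq_trans (ltn_ord l)).
rewrite E1 E2.
have K := key3 (fun d => lps w d j) c.
have K' := key3 (fun d => lps w d j) c'.
simpl in K, K'.
move: K K'.
move: (lps w c j) (lps w (g3 c) j) (lps w (g3 (g3 c)) j) (lps w c' j) (lps w (g3 c') j) (lps w (g3 (g3 c')) j) (lps w 0%R j) (lps w 1%R j) (lps w 2%R j).
move: (\sum_(l < j) _) (\sum_(l < j) _).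
move=> *; lia.
Qed.

Fixpoint tri (n : nat) (w : seq 'I_3) : seq 'I_3 :=
  if n is n'.+1 then triple (tri n' w) else w.

Lemma reg_tri s n w : reg s w -> reg (s + n) (tri n w).
Proof.
move=> Hw; elim: n => [|n IH] /=; first by rewrite addn0.
by rewrite addnS; apply: reg_triple.
Qed.

Lemma size_tri n w : size (tri n w) = 3 ^ n * size w.
Proof.
elim: n => [|n IH] /=; first by rewrite mul1n.
by rewrite /triple !size_cat !size_map IH expnS; lia.
Qed.

Definition rep (a : nat) (w : seq 'I_3) := flatten (nseq a w).

Lemma reg_rep s a w : reg s w -> reg s (rep a w).
Proof.
move=> Hw; elim: a => [|a IH] /=; first exact: reg_nil.
exact: reg_cat.
Qed.

Lemma size_rep a w : size (rep a w) = a * size w.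
Proof. by elim: a => [|a IH] //=; rewrite size_cat IH mulSn. Qed.

Definition o0 : 'I_3 := @Ordinal 3 0 isT.
Definition o1 : 'I_3 := @Ordinal 3 1 isT.
Definition o2 : 'I_3 := @Ordinal 3 2 isT.
Definition oo (n : nat) : 'I_3 := match n with 0 => o0 | 1 => o1 | _ => o2 end.

Definition w6 : seq 'I_3 := map oo [:: 0; 1; 2; 2; 1; 0].
Definition w36 : seq 'I_3 := map oo
  [:: 1; 2; 0; 0; 1; 2; 2; 0; 2; 1; 0; 1; 0; 1; 1; 2; 2; 0; 0; 1; 1; 2; 2; 0; 2; 0; 2; 1; 0; 1; 1; 2; 0; 0; 1; 2].

Lemma ord3_cases (c : 'I_3) : [\/ c = o0, c = o1 | c = o2].
Proof.
case: c => [[|[|[|m]]] Hm] //.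
- by constructor 1; apply/val_inj.
- by constructor 2; apply/val_inj.
- by constructor 3; apply/val_inj.
Qed.

Lemma reg_w6 : reg 1 w6.
Proof.
suff H : forall j, j <= 1 -> forall c, lps w6 c j = lps w6 o0 j.
  by move=> j Hj c c'; rewrite !H.
case=> [|[|//]] _ c; case: (ord3_cases c) => ->;
  apply/eqP; rewrite /letter_pow_sum unlock; vm_compute; reflexivity.
Qed.

Lemma reg_w36 : reg 3 w36.
Proof.
suff H : forall j, j <= 3 -> forall c, lps w36 c j = lps w36 o0 j.
  by move=> j Hj c c'; rewrite !H.
case=> [|[|[|[|//]]]] _ c; case: (ord3_cases c) => ->;
  apply/eqP; rewrite /letter_pow_sum unlock; vm_compute; reflexivity.
Qed.

Unset Implicit Arguments.
Set Strict Implicit.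
Theorem mainTheorem13 (r k : nat) (hr : 3 <= r) (hk : 2 <= k) :
  exists u : seq 'I_3,
    size u = (2 * k * 3 ^ (r - 1))%N /\ regular (Posz r) u.
Proof.
have [b [a [Hb Hk]]] : exists b a, b <= 1 /\ k = 2 * a + 3 * b.
  exists (odd k), ((k - 3 * odd k) %/ 2).
  case Ho: (odd k); split => //.
    have := odd_double_half k; rewrite Ho; lia.
  have := odd_double_half k; rewrite Ho; lia.
exists (rep a (tri (r - 3) w36) ++ rep b (tri (r - 1) w6)); split.
  rewrite size_cat !size_rep !size_tri /=.
  have -> : r - 1 = (r - 3).+2 by lia.
  rewrite !expnS Hk; lia.
move=> j; rewrite lez_nat => Hj c c'.
have H1 : reg r (rep a (tri (r - 3) w36)).
  apply: reg_rep; have := reg_tri (n:=r - 3) reg_w36; by rewrite subnKC.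
have H2 : reg r (rep b (tri (r - 1) w6)).
  apply: reg_rep; have := reg_tri (n:=r - 1) reg_w6; rewrite subnKC //; lia.
exact: (reg_cat H1 H2).
Qed.
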